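(* Assume that $\pi$ is a permutation of length $j$ and $\delta=\delta_1\cdots\delta_{k+1}$ is a permutation of length $k+1$, disjoint from each other, where $\mathrm{des}(\pi) = j'$ and $\mathrm{des}(\delta) = k'$. Moreover, $\delta_1<\delta_2$ and all of the elements of $\delta$ are larger than the elements of $\pi$. Then \begin{align*} \sum_{\alpha \in \mathrm{Sh}_l(\pi,\delta)} t^{\mathrm{des}(\alpha)}&=\sum_{i\geq 1} \binom{k+1-k'+j'}{i+j'-k'} \binom{j-j'+k'-1}{i-1} t^{i+j'},\\ \sum_{\alpha \in \mathrm{Sh}_{ls}(\pi,\delta)} t^{\mathrm{des}(\alpha)}&=\sum_{i\geq 1} \binom{k-k'+j'}{i+j'-k'} \binom{j-j'+k'-1}{i-1} t^{i+j'},\\ \sum_{\alpha \in \mathrm{Sh}_{ll}(\pi,\delta)} t^{\mathrm{des}(\alpha)}&=\sum_{i\geq 1} \binom{k-k'+j'}{i+j'-k'} \binom{j-j'+k'-1}{i-1} t^{i+j'}. \end{align*}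
   Context: A permutation of length $n$ here means a sequence of $n$ distinct integers (not necessarily $1,\dots,n$); two permutations are disjoint if they have no letters in common. For $\alpha=\alpha_1\cdots\alpha_n$, $\mathrm{des}(\alpha)$ is the number of indices $i$ with $\alpha_i>\alpha_{i+1}$. For disjoint permutations $\pi=\pi_1\cdots\pi_m$ and $\delta=\delta_1\cdots\delta_n$, a shuffle of $\pi$ and $\delta$ is a permutation $\alpha=\alpha_1\cdots\alpha_{m+n}$ containing both $\pi$ and $\delta$ as subsequences. $\mathrm{Sh}_l(\pi,\delta)$ is the set of shuffles with $\alpha_1=\delta_1$; $\mathrm{Sh}_{ls}(\pi,\delta)$ is the set of shuffles with $\alpha_1=\delta_1$ and $\alpha_{n+m}=\delta_n$ (the last letter of $\delta$); $\mathrm{Sh}_{ll}(\pi,\delta)$ is the set of shuffles with $\alpha_1=\delta_1$ and $\alpha_2=\delta_2$. *)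

(* Defs.v *)
From mathcomp Require Import all_boot all_order all_algebra.
Set Implicit Arguments. Unset Strict Implicit. Unset Printing Implicit Defensive.
Import Order.TTheory GRing.Theory Num.Theory.

(* A "permutation" is a duplicate-free sequence of integers (seq int, uniq). *)

Definition des (s : seq int) : nat :=
  \sum_(i < (size s).-1) (nth 0%R s i.+1 < nth 0%R s i)%R.

Definition is_shuffle (pi delta alpha : seq int) : bool :=
  [&& uniq alpha, size alpha == size pi + size delta,
      subseq pi alpha & subseq delta alpha].

(* Any shuffle of disjoint pi, delta is a rearrangement of pi ++ delta,
   so the (finite) sets of shuffles are enumerated by filtering the
   duplicate-free list of all rearrangements of pi ++ delta. *)
Definition Sh_l (pi delta : seq int) : seq (seq int) :=
  [seq a <- permutations (pi ++ delta) |
     is_shuffle pi delta a && (nth 0%R a 0 == nth 0%R delta 0)].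

Definition Sh_ls (pi delta : seq int) : seq (seq int) :=
  [seq a <- permutations (pi ++ delta) |
     [&& is_shuffle pi delta a, nth 0%R a 0 == nth 0%R delta 0
       & last 0%R a == last 0%R delta]].

Definition Sh_ll (pi delta : seq int) : seq (seq int) :=
  [seq a <- permutations (pi ++ delta) |
     [&& is_shuffle pi delta a, nth 0%R a 0 == nth 0%R delta 0
       & nth 0%R a 1 == nth 0%R delta 1]].

Definition binz (n : nat) (m : int) : nat :=
  match m with Posz m' => 'C(n, m') | Negz _ => 0 end.

Definition desgen (S : seq (seq int)) : {poly int} :=
  (\sum_(a <- S) 'X^(des a))%R.

(* Main.v *)
Require Import Defs.
From mathcomp Require Import all_boot all_order all_algebra ring zify.
Import Order.TTheory GRing.Theory Num.Theory.

Module Helpers.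
Set Implicit Arguments. Unset Strict Implicit.


Fixpoint sh (p d : seq int) : seq (seq int) :=
  match p with
  | [::] => [:: d]
  | x :: p' =>
    let fix shx (d : seq int) :=
      match d with
      | [::] => [:: x :: p']
      | y :: d' => map (cons x) (sh p' d) ++ map (cons y) (shx d')
      end in shx d
  end.

Definition shP (p d : seq int) := if p is x :: p' then map (cons x) (sh p' d) else [::].
Definition shD (p d : seq int) := if d is y :: d' then map (cons y) (sh p d') else [::].

Lemma sh_cons2 x p y d : sh (x :: p) (y :: d) = shP (x :: p) (y :: d) ++ shD (x :: p) (y :: d).
Proof. by []. Qed.
Lemma sh_nil_l d : sh [::] d = [:: d]. Proof. by []. Qed.
Lemma sh_nil_r p : sh p [::] = [:: p]. Proof. by case: p. Qed.

Lemma mem_sh_P p d a : a \in sh p d -> [&& perm_eq a (p ++ d), subseq p a & subseq d a].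
Proof.
elim: p d a => [|x p IHp] d a.
  by rewrite sh_nil_l inE => /eqP->; rewrite perm_refl subseq_refl sub0seq.
elim: d a => [|y d IHd] a.
  by rewrite sh_nil_r inE => /eqP->; rewrite cats0 perm_refl subseq_refl sub0seq.
rewrite sh_cons2 mem_cat => /orP[] /mapP[a' Ha' ->].
  have /and3P[H1 H2 H3] := IHp _ _ Ha'.
  have -> : subseq (x :: p) (x :: a') = subseq p a' by rewrite /= eqxx.
  rewrite H2 perm_cons H1 /=.
  exact: (subseq_trans H3 (subseq_cons _ _)).
have /and3P[H1 H2 H3] := IHd _ Ha'.
have -> : subseq (y :: d) (y :: a') = subseq d a' by rewrite /= eqxx.
rewrite H3 andbT (subseq_trans H2 (subseq_cons _ _)) andbT.
by rewrite perm_sym -(cat1s y d) (perm_catCA (x :: p) [:: y] d) /= perm_cons perm_sym.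
Qed.

Lemma subseq_cons_eq (x : int) s t : subseq (x :: s) (x :: t) = subseq s t.
Proof. by rewrite /= eqxx. Qed.
Lemma subseq_cons_neq (x w : int) s t : w != x -> subseq (x :: s) (w :: t) = subseq (x :: s) t.
Proof. by move=> H; rewrite /= eq_sym (negbTE H). Qed.

Lemma perm_mid (s t : seq int) y : perm_eq (s ++ y :: t) (y :: s ++ t).
Proof. by rewrite -(cat1s y t) (perm_catCA s [:: y] t). Qed.

Lemma mem_sh_S a p d : uniq (p ++ d) -> perm_eq a (p ++ d) -> subseq p a -> subseq d a ->
  a \in sh p d.
Proof.
elim: a p d => [|w a IH] p d U P Sp Sd.
  have := perm_size P; rewrite size_cat /=.
  by case: p {P Sp U} => [|? ?]; case: d {Sd} => [|? ?] //.
case: p U P Sp => [|x p] U P Sp.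
  have Hs := perm_size P; rewrite /= in Hs.
  have := (size_subseq_leqif Sd).2; rewrite -Hs eqxx => /esym/eqP->.
  by rewrite sh_nil_l inE.
case: d U P Sd => [|y d] U P Sd.
  have Hs := perm_size P; rewrite cats0 in P Hs.
  have := (size_subseq_leqif Sp).2; rewrite -Hs eqxx => /esym/eqP->.
  by rewrite sh_nil_r inE.
have Ua : uniq (w :: a) by rewrite (perm_uniq P).
have wpd : w \in (x :: p) ++ y :: d by rewrite -(perm_mem P) mem_head.
have U' : uniq (y :: (x :: p) ++ d) by rewrite -(perm_uniq (perm_mid _ _ _)).
have xy : x != y.
  apply/eqP=> exy; move: U'; rewrite exy /= mem_head.
  by [].
rewrite sh_cons2 mem_cat; apply/orP.
have [ewx|nwx] := eqVneq w x.
  subst w; left; apply: map_f; apply: IH.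
  - by move: U; rewrite cat_cons => /andP[].
  - by move: P; rewrite cat_cons perm_cons.
  - by move: Sp; rewrite subseq_cons_eq.
  - by move: Sd; rewrite subseq_cons_neq // eq_sym.
have [ewy|nwy] := eqVneq w y.
  subst w; right; apply: map_f; apply: IH.
  - by move: U' => /andP[].
  - by rewrite -(perm_cons y); exact: (perm_trans P (perm_mid (x :: p) d y)).
  - by move: Sp; rewrite subseq_cons_neq.
  - by move: Sd; rewrite subseq_cons_eq.
exfalso.
move: Sp Sd; rewrite !subseq_cons_neq // => Sp Sd.
move: Ua; rewrite /= => /andP[/negP Hn _]; apply: Hn.
move: wpd; rewrite mem_cat => /orP[] H.
  exact: (mem_subseq Sp).
exact: (mem_subseq Sd).
Qed.

Lemma cons_inj (x : int) : injective (cons x).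
Proof. by move=> ? ? []. Qed.

Lemma uniq_sh p d : uniq (p ++ d) -> uniq (sh p d).
Proof.
elim: p d => [|x p IHp] d; first by rewrite sh_nil_l.
elim: d => [|y d IHd] U; first by rewrite sh_nil_r.
have U' : uniq (y :: (x :: p) ++ d) by rewrite -(perm_uniq (perm_mid _ _ _)).
have xy : x != y by apply/eqP=> exy; move: U'; rewrite exy /= mem_head.
rewrite sh_cons2 cat_uniq /= !map_inj_uniq; try exact: cons_inj.
rewrite IHp; last by move: U => /andP[].
rewrite IHd; last by move: U' => /andP[].
rewrite andbT /=; apply/hasPn => b /mapP[b' _ ->]; apply/negP => /mapP[b'' _ []] eyx _.
by move: xy; rewrite eyx eqxx.
Qed.

Lemma mem_shD x p y d a : a \in shD (x :: p) (y :: d) -> a \in sh (x :: p) (y :: d).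
Proof. by rewrite sh_cons2 mem_cat => ->; rewrite orbT. Qed.

Lemma Sh_l_perm x p y d : uniq ((x :: p) ++ y :: d) ->
  perm_eq (Sh_l (x :: p) (y :: d)) (shD (x :: p) (y :: d)).
Proof.
move=> U.
have U' : uniq (y :: (x :: p) ++ d) by rewrite -(perm_uniq (perm_mid _ _ _)).
have xy : x != y by apply/eqP=> exy; move: U'; rewrite exy /= mem_head.
apply: uniq_perm.
- by rewrite filter_uniq // permutations_uniq.
- rewrite /shD map_inj_uniq; last exact: cons_inj.
  by apply: uniq_sh; move: U' => /andP[].
move=> a; rewrite /Sh_l mem_filter mem_permutations /is_shuffle.
apply/idP/idP.
  case/andP=> /andP[/and4P[_ _ Sp Sd] /eqP h0] P.
  have := mem_sh_S U P Sp Sd; rewrite sh_cons2 mem_cat => /orP[] //.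
  by move=> /mapP[a' _ ea]; move: h0; rewrite ea /= => exy; move: xy; rewrite exy eqxx.
move=> Ha; have := mem_sh_P (mem_shD Ha) => /and3P[P Sp Sd].
rewrite P Sp Sd (perm_uniq P) U (perm_size P) size_cat eqxx /=.
by move: Ha => /= /mapP[a' _ ->]; rewrite /= eqxx.
Qed.

Local Open Scope ring_scope.

Definition cf (A B n : nat) : {poly int} :=
  \sum_(v < n.+1) ('C(B, v) * 'C(A, n - v))%N%:R * 'X^v.
Definition c (l : seq bool) n := cf (count negb l) (count id l) n.

Lemma cf0 A B : cf A B 0 = 1.
Proof. by rewrite /cf big_ord1 !bin0 expr0 mulr1. Qed.

Lemma cfT A B n : cf A B.+1 n.+1 = cf A B n.+1 + 'X * cf A B n.
Proof.
rewrite /cf big_ord_recl [in RHS]big_ord_recl /= !bin0 -addrA; congr (_ + _).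
rewrite mulr_sumr -big_split /=; apply: eq_bigr => i _.
rewrite /bump /= !add1n subSS binS mulnDl natrD mulrDl exprS; congr (_ + _).
by rewrite mulrCA.
Qed.


Lemma cfF A B n : cf A.+1 B n.+1 = cf A B n.+1 + cf A B n.
Proof.
rewrite /cf big_ord_recr [in X in _ = X + _]big_ord_recr /= !subnn !bin0 addrAC; congr (_ + _).
rewrite -big_split /=; apply: eq_bigr => i _.
have hi := ltn_ord i.
by rewrite subSn // binS mulnDr natrD mulrDl.
Qed.

Lemma cf_big A B n : (A + B < n)%N -> cf A B n = 0.
Proof.
elim: A B n => [|A IHA] B n.
  elim: B n => [|B IHB] [|n] //= H.
    rewrite /cf big1 // => -[[|v] Hv] _ /=; by rewrite ?bin0n /= ?muln0 ?mul0n ?mul0r.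
  by rewrite cfT !IHB ?mulr0 ?addr0 // ltnW.
case: n => [|n] // H.
by rewrite cfF !IHA ?addr0 //= ltnW.
Qed.

Lemma cf_top A B : cf A B (A + B) = 'X^B.
Proof.
elim: A B => [|A IHA] B.
  elim: B => [|B IHB]; first by rewrite cf0 expr0.
  by rewrite add0n cfT cf_big // -[B in cf _ _ B]add0n IHB add0r exprS.
by rewrite addSn cfF IHA cf_big ?add0r.
Qed.

Lemma c0 l : c l 0 = 1. Proof. exact: cf0. Qed.
Lemma c_cons b l n : c (b :: l) n.+1 = c l n.+1 + (if b then 'X else 1) * c l n.
Proof. by case: b; rewrite /c /= ?add0n ?add1n ?cfT ?cfF ?mul1r. Qed.
Lemma c_perm l1 l2 : perm_eq l1 l2 -> c l1 = c l2.
Proof. by move=> /permP H; rewrite /c !H. Qed.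
Lemma size_cnt (l : seq bool) : size l = (count negb l + count id l)%N.
Proof. by rewrite -(count_predC id l) addnC. Qed.
Lemma c_top l : c l (size l) = 'X^(count id l).
Proof. by rewrite /c size_cnt cf_top. Qed.
Lemma c_big l n : (size l < n)%N -> c l n = 0.
Proof. by rewrite /c size_cnt => /cf_big. Qed.

Local Close Scope ring_scope.
Local Open Scope ring_scope.

Fixpoint gaps (s : seq int) : seq bool :=
  match s with x :: ((y :: _) as s') => (y < x) :: gaps s' | _ => [::] end.

Lemma des_cons2 x y s : des (x :: y :: s) = ((y < x)%R + des (y :: s))%N.
Proof. by rewrite /des /= big_ord_recl. Qed.
Lemma des1 x : des [:: x] = 0%N.
Proof. by rewrite /des big_ord0. Qed.
Lemma des_gaps s : des s = count id (gaps s).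
Proof.
elim: s => [|x [|y s] IH]; first by rewrite /des big_ord0.
  by rewrite des1.
by rewrite des_cons2 IH.
Qed.
Lemma size_gaps s : size (gaps s) = (size s).-1.
Proof. by elim: s => [|x [|y s] IH] //=; rewrite IH. Qed.

Definition ord (p d : seq int) := forall x w, x \in p -> w \in d -> x < w.

Definition SP (Q : pred (seq int)) p d := \sum_(a <- shP p d | Q a) 'X^(des a) : {poly int}.
Definition SD (Q : pred (seq int)) p d := \sum_(a <- shD p d | Q a) 'X^(des a) : {poly int}.

Lemma shD_cons p y d : shD p (y :: d) = map (cons y) (sh p d). Proof. by []. Qed.
Lemma shP_cons x p d : shP (x :: p) d = map (cons x) (sh p d). Proof. by []. Qed.

Section Rec.
Variable Q : pred (seq int).
Hypothesis QH : forall y x a, Q (y :: x :: a) = Q (x :: a).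

Lemma SD_rec x p y w d : ord (x :: p) (y :: w :: d) ->
  SD Q (x :: p) (y :: w :: d) = 'X^(nat_of_bool (w < y)) * SD Q (x :: p) (w :: d) + 'X * SP Q (x :: p) (w :: d).
Proof.
move=> H; rewrite /SD /SP !shD_cons !shP_cons big_map sh_cons2 big_cat shD_cons shP_cons !big_map addrC.
have xy : x < y by apply: H; rewrite mem_head.
congr (_ + _); rewrite mulr_sumr; apply: eq_big => a; rewrite ?QH // => _.
  by rewrite des_cons2 xy exprD expr1.
by rewrite des_cons2 exprD.
Qed.

Lemma SP_rec x x' p w d : ord (x :: x' :: p) (w :: d) ->
  SP Q (x :: x' :: p) (w :: d) = 'X^(nat_of_bool (x' < x)) * SP Q (x' :: p) (w :: d) + SD Q (x' :: p) (w :: d).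
Proof.
move=> H; rewrite /SD /SP !shD_cons !shP_cons big_map sh_cons2 big_cat shD_cons shP_cons !big_map.
have xw : x < w by apply: H; rewrite mem_head.
congr (_ + _); first rewrite mulr_sumr; apply: eq_big => a; rewrite ?QH // => _.
  by rewrite des_cons2 exprD.
by rewrite des_cons2 ltNge (ltW xw) /= add0n.
Qed.

Lemma SD_base x p y : SD Q (x :: p) [:: y] = if Q (y :: x :: p) then 'X^(des (y :: x :: p)) else 0.
Proof. by rewrite /SD shD_cons sh_nil_r big_map big_cons big_nil addr0. Qed.

Lemma SP_base x w d : SP Q [:: x] (w :: d) = if Q (x :: w :: d) then 'X^(des (x :: w :: d)) else 0.
Proof. by rewrite /SP shP_cons sh_nil_l big_map big_cons big_nil addr0. Qed.
End Rec.

Local Close Scope ring_scope.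
Local Open Scope ring_scope.

Definition G p d := false :: gaps d ++ map negb (gaps p).
Definition H p d := gaps d ++ map negb (gaps p).

Lemma perm_midT (T : eqType) (s t : seq T) y : perm_eq (s ++ y :: t) (y :: s ++ t).
Proof. by rewrite -(cat1s y t) (perm_catCA s [:: y] t). Qed.

Lemma gaps_cons2 x y s : gaps (x :: y :: s) = (y < x) :: gaps (y :: s). Proof. by []. Qed.

Lemma c_mid l1 b l2 n : c (l1 ++ b :: l2) n = c (b :: l1 ++ l2) n.
Proof. by rewrite (c_perm (perm_midT _ _ _)). Qed.
Lemma c_mid' a l1 b l2 n : c (a :: l1 ++ b :: l2) n = c (b :: a :: l1 ++ l2) n.
Proof. exact: (c_mid (a :: l1)). Qed.
Lemma c_swap a b l n : c (a :: b :: l) n = c (b :: a :: l) n.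
Proof. exact: (c_mid [:: a]). Qed.

Lemma ord_sub p d p' d' : ord p d -> {subset p' <= p} -> {subset d' <= d} -> ord p' d'.
Proof. by move=> Ho Sp Sd x w /Sp xp /Sd wd; apply: Ho. Qed.

Lemma QT : forall y x (a : seq int), xpredT (y :: x :: a) = xpredT (x :: a).
Proof. by []. Qed.

Lemma F_closed p d : p != [::] -> d != [::] -> ord p d ->
  SD xpredT p d = 'X^((des p).+1) * c (G p d) (size d).-1 /\
  SP xpredT p d = 'X^(des p) * c (G p d) (size d).
Proof.
elim: p d => [//|x p IHp] d _.
elim: d => [//|y d IHd] _ Ho; split.
- case: d IHd Ho => [|w d] IHd Ho.
    rewrite SD_base /= c0 mulr1 des_cons2.
    by rewrite (Ho x y) ?mem_head.
  have [IH1 IH2] := IHd isT (ord_sub Ho (fun z h => h) (fun z h => mem_behead h)).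
  rewrite SD_rec // IH1 IH2 /G gaps_cons2 cat_cons c_swap -/(G (x :: p) (w :: d)).
  have sz1 : size (w :: d) = (size d).+1 by [].
  have sz2 : (size [:: y, w & d]).-1 = (size d).+1 by [].
  rewrite sz1 sz2 succnK c_cons.
  by case: (w < y); rewrite ?expr1 ?expr0 !exprS; ring.
- clear IHd; case: p IHp Ho => [|x' p] IHp Ho.
    rewrite SP_base des1 expr0 mul1r.
    have -> : G [:: x] (y :: d) = false :: gaps (y :: d) by rewrite /G /= cats0.
    have -> : size (y :: d) = size (false :: gaps (y :: d)) by rewrite (_ : size (false :: gaps (y :: d)) = (size (gaps (y :: d))).+1) // size_gaps.
    rewrite c_top.
    have -> : count id (false :: gaps (y :: d)) = des (y :: d) by rewrite des_gaps.
    have xy : x < y by apply: Ho; rewrite mem_head.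
    by rewrite des_cons2 ltNge (ltW xy).
  have [IH1 IH2] := IHp (y :: d) isT isT (ord_sub Ho (fun z h => mem_behead h) (fun z h => h)).
  rewrite SP_rec // IH1 IH2 /G gaps_cons2.
  rewrite (_ : map negb ((x' < x) :: gaps (x' :: p)) = ~~ (x' < x) :: map negb (gaps (x' :: p))) //.
  rewrite c_mid' -/(G (x' :: p) (y :: d)).
  have sz : size (y :: d) = (size d).+1 by [].
  rewrite sz succnK c_cons des_cons2.
  by case: (x' < x); rewrite /= ?expr1 ?expr0 ?add0n ?add1n !exprS; ring.
Qed.

Definition QL (z : int) := fun a : seq int => last 0 a == z.
Lemma QLH z : forall y x (a : seq int), QL z (y :: x :: a) = QL z (x :: a).
Proof. by []. Qed.

Lemma Ld_base z x p y : ord (x :: p) [:: y] -> z = y -> SD (QL z) (x :: p) [:: y] = 0.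
Proof.
move=> Ho ->; rewrite SD_base.
have : last x p < y by apply: Ho; rewrite ?mem_last ?mem_head.
by rewrite /QL /= => /lt_eqF ->.
Qed.

Lemma L_closed z p d : p != [::] -> d != [::] -> ord p d -> last 0 d = z ->
  ((1 < size d)%N -> SD (QL z) p d = 'X^((des p).+1) * c (H p d) (size d).-2) /\
  SP (QL z) p d = 'X^(des p) * c (H p d) (size d).-1.
Proof.
move=> + + + Hz; elim: p d Hz => [//|x p IHp] d Hz _.
elim: d Hz => [//|y d IHd] Hz _ Ho; split.
- case: d IHd Ho Hz => [//|w d] IHd Ho Hz _.
  have Ho' := ord_sub Ho (fun z h => h) (fun z h => mem_behead h).
  have [IH1 IH2] := IHd Hz isT Ho'.
  rewrite SD_rec ?QLH // IH2 /H gaps_cons2 cat_cons -/(H (x :: p) (w :: d)).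
  case: d IHd Ho Hz Ho' IH1 IH2 => [|v d] IHd Ho Hz Ho' IH1 IH2.
    rewrite Ld_base // !c0 mulr0 add0r mulr1 exprS.
    by rewrite mulr1.
  rewrite IH1 //.
  have sz1 : (size [:: w, v & d]).-1 = (size d).+1 by [].
  have sz2 : (size [:: y, w, v & d]).-2 = (size d).+1 by [].
  have sz3 : (size [:: w, v & d]).-2 = (size d) by [].
  rewrite sz2 sz3 c_cons.
  by case: (w < y); rewrite ?expr1 ?expr0 !exprS; ring.
- clear IHd; case: p IHp Ho => [|x' p] IHp Ho.
    rewrite SP_base ?QLH // des1 expr0 mul1r.
    rewrite /QL Hz eqxx.
    have -> : H [:: x] (y :: d) = gaps (y :: d) by rewrite /H /= cats0.
    have -> : (size (y :: d)).-1 = size (gaps (y :: d)) by rewrite size_gaps.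
    rewrite c_top -des_gaps.
    have xy : x < y by apply: Ho; rewrite mem_head.
    by rewrite des_cons2 ltNge (ltW xy).
  have Ho' := ord_sub Ho (fun z h => mem_behead h) (fun z h => h).
  have [IH1 IH2] := IHp (y :: d) Hz isT isT Ho'.
  rewrite SP_rec ?QLH // IH2 /H gaps_cons2.
  rewrite (_ : map negb ((x' < x) :: gaps (x' :: p)) = ~~ (x' < x) :: map negb (gaps (x' :: p))) //.
  rewrite c_mid -/(H (x' :: p) (y :: d)) des_cons2.
  case: d IHp Ho Hz Ho' IH1 IH2 => [|v d] IHp Ho Hz Ho' IH1 IH2.
    by rewrite Ld_base // !c0 addr0 !mulr1 exprD.
  rewrite IH1 //.
  have sz1 : (size [:: y, v & d]).-1 = (size d).+1 by [].
  have sz2 : (size [:: y, v & d]).-2 = (size d) by [].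
  rewrite sz1 sz2 c_cons.
  by case: (x' < x); rewrite /= ?expr1 ?expr0 ?add0n ?add1n !exprS; ring.
Qed.

Local Close Scope ring_scope.
Local Open Scope ring_scope.

Lemma binz_val A n v j' k' : (A + k' = n + 1 + j')%N -> (v <= n)%N ->
  binz A (v.+1%:Z + j'%:Z - k'%:Z) = 'C(A, n - v).
Proof.
move=> HA Hv.
case E: (v.+1%:Z + j'%:Z - k'%:Z) => [m|m] /=.
  have -> : m = (A - (n - v))%N by lia.
  rewrite bin_sub //; lia.
rewrite NegzE in E.
rewrite bin_small //; lia.
Qed.

Lemma binz_big A n v j' k' : (A + k' = n + 1 + j')%N -> (n < v)%N ->
  binz A (v.+1%:Z + j'%:Z - k'%:Z) = 0%N.
Proof.
move=> HA Hv.
case E: (v.+1%:Z + j'%:Z - k'%:Z) => [m|m] //=.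
rewrite bin_small //; lia.
Qed.

Lemma final_sum l n A B j' k' M : count negb l = A -> count id l = B ->
  (A + k' = n + 1 + j')%N -> (n.+1 < M)%N ->
  'X^(j'.+1) * c l n = \sum_(1 <= i < M)
     ((binz A (i%:Z + j'%:Z - k'%:Z) * 'C(B, i - 1))%N%:R * 'X^(i + j')).
Proof.
move=> hA hB HA HM.
rewrite /c hA hB /cf mulr_sumr.
case: M HM => [//|M] HM.
rewrite big_add1 /= (big_cat_nat _ (n := n.+1)) //=.
rewrite [X in _ + X]big1_seq ?addr0; last first.
  move=> v /andP[_]; rewrite mem_index_iota => /andP[Hv _].
  by rewrite (binz_big (n := n)) // mul0n mul0r.
rewrite big_mkord; apply: eq_bigr => v _.
have Hv : (v <= n)%N by rewrite -ltnS.
rewrite (binz_val (n := n)) // subn1 /= mulnC mulrCA -exprD; congr (_ * 'X^_); lia.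
Qed.

Local Close Scope ring_scope.

Lemma cnt_negb (g : seq bool) : count negb g = (size g - count id g)%N.
Proof. by rewrite -(count_predC id g) addKn. Qed.
Lemma cnt_nn (g : seq bool) : count negb (map negb g) = count id g.
Proof. by rewrite count_map; apply: eq_count => b /=; rewrite negbK. Qed.
Lemma cnt_idn (g : seq bool) : count id (map negb g) = count negb g.
Proof. by rewrite count_map. Qed.
Lemma cnt_le (g : seq bool) : (count id g <= size g)%N.
Proof. exact: count_size. Qed.

Lemma cG p d : count negb (G p d) = (1 + (size (gaps d) - des d) + des p)%N /\
               count id (G p d) = (des d + (size (gaps p) - des p))%N.
Proof.
by rewrite /G /= !count_cat cnt_nn cnt_idn !cnt_negb -!des_gaps.
Qed.
Lemma cH p d : count negb (H p d) = ((size (gaps d) - des d) + des p)%N /\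
               count id (H p d) = (des d + (size (gaps p) - des p))%N.
Proof.
by rewrite /H /= !count_cat cnt_nn cnt_idn !cnt_negb -!des_gaps.
Qed.
Lemma des_le s : (des s <= (size s).-1)%N.
Proof. by rewrite des_gaps -size_gaps cnt_le. Qed.

Local Open Scope ring_scope.
Lemma rhs0 j k j' :
  (\sum_(1 <= i < j + k + 2)
     (binz j' (i%:Z + j'%:Z - 0%:Z) * 'C(j - j' + 0 - 1, i - 1))%N%:R * 'X^(i + j') : {poly int}) = 0.
Proof.
apply: big1_seq => i; rewrite mem_index_iota => /andP[_ /andP[Hi _]].
case E: (i%:Z + j'%:Z - 0%:Z) => [m|m] /=; last by rewrite mul0n mul0r.
rewrite bin_small ?mul0n ?mul0r //; lia.
Qed.

End Helpers.
Import Helpers.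
Unset Implicit Arguments.


Theorem theorem3p4 (j k j' k' : nat) (pi delta : seq int) :
  uniq pi -> uniq delta -> size pi = j -> size delta = k.+1 ->
  0 < j ->
  all (fun x => x \notin delta) pi ->
  des pi = j' -> des delta = k' ->
  (nth 0%R delta 0 < nth 0%R delta 1)%R ->
  (forall x y, x \in pi -> y \in delta -> (x < y)%R) ->
  [/\ desgen (Sh_l pi delta) =
        (\sum_(1 <= i < j + k + 2)
           (binz (k.+1 - k' + j') (i%:Z + j'%:Z - k'%:Z)%R
              * 'C(j - j' + k' - 1, i - 1))%N%:R * 'X^(i + j'))%R,
      desgen (Sh_ls pi delta) =
        (\sum_(1 <= i < j + k + 2)
           (binz (k - k' + j') (i%:Z + j'%:Z - k'%:Z)%R
              * 'C(j - j' + k' - 1, i - 1))%N%:R * 'X^(i + j'))%R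
    & desgen (Sh_ll pi delta) =
        (\sum_(1 <= i < j + k + 2)
           (binz (k - k' + j') (i%:Z + j'%:Z - k'%:Z)%R
              * 'C(j - j' + k' - 1, i - 1))%N%:R * 'X^(i + j'))%R].
Proof.
move=> Upi Udel Hj Hk Hj0 _ Hj' Hk' H01 Ho.
case: pi Upi Hj Hj' Ho => [|x p] Upi Hj Hj' Ho; first by rewrite -Hj in Hj0.
case: delta Udel Hk Hk' H01 Ho => [//|y d] Udel Hk Hk' H01 Ho.
have U : uniq ((x :: p) ++ y :: d).
  rewrite cat_uniq Upi Udel andbT; apply/hasPn => w wd; apply/negP => wp.
  by have := Ho w w wp wd; rewrite ltxx.
have Hsl : desgen (Sh_l (x :: p) (y :: d)) = SD xpredT (x :: p) (y :: d).
  by rewrite /desgen (perm_big _ (Sh_l_perm U)).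
have hp : j' <= size p by rewrite -Hj'; exact: des_le.
have hk : k' <= size d by rewrite -Hk'; exact: des_le.
have hj : j = (size p).+1 by rewrite -Hj.
have szd : size d = k by case: Hk.
have e1 : size (gaps (x :: p)) = size p by rewrite size_gaps.
have e2 : size (gaps (y :: d)) = size d by rewrite size_gaps.
split.
- rewrite Hsl (@F_closed (x :: p) (y :: d) isT isT Ho).1.
  have [c1 c2] := cG (x :: p) (y :: d).
  rewrite e1 e2 Hj' Hk' in c1 c2.
  rewrite Hj'; apply: final_sum; rewrite ?c1 ?c2 /=; lia.
- have Els : Sh_ls (x :: p) (y :: d) = filter (QL (last 0%R (y :: d))) (Sh_l (x :: p) (y :: d)).
    by rewrite /Sh_ls /Sh_l -filter_predI; apply: eq_filter => a; rewrite /= /QL [RHS]andbC andbA.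
  rewrite Els /desgen big_filter (perm_big _ (Sh_l_perm U)); clear Els.
  have -> : (\sum_(a <- shD (x :: p) (y :: d) | QL (last 0%R (y :: d)) a) 'X^(des a))%R
    = SD (QL (last 0%R (y :: d))) (x :: p) (y :: d) by [].
  case: d Udel Hk Hk' H01 Ho U Hsl hk szd e2 => [|w d] Udel Hk Hk' H01 Ho U Hsl hk szd e2.
    have k0 : k = 0 by rewrite -szd.
    have k'0 : k' = 0 by rewrite -Hk' des1.
    subst k k'; rewrite Ld_base //; symmetry; rewrite des1; exact: (rhs0 j 0 j').
  rewrite (@L_closed _ (x :: p) (y :: w :: d) isT isT Ho erefl).1 //.
  have [c1 c2] := cH (x :: p) (y :: w :: d).
  rewrite e1 e2 Hj' Hk' in c1 c2.
  rewrite Hj'; apply: final_sum; rewrite ?c1 ?c2 /=; move: szd hk => /= szd hk; lia.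
- have Ell : Sh_ll (x :: p) (y :: d) =
     filter (fun a => nth 0%R a 1 == nth 0%R (y :: d) 1) (Sh_l (x :: p) (y :: d)).
    by rewrite /Sh_ll /Sh_l -filter_predI; apply: eq_filter => a; rewrite /= [RHS]andbC andbA.
  rewrite Ell /desgen big_filter (perm_big _ (Sh_l_perm U)); clear Ell.
  case: d Udel Hk Hk' H01 Ho U Hsl hk szd e2 => [|w d] Udel Hk Hk' H01 Ho U Hsl hk szd e2.
    have k0 : k = 0 by rewrite -szd.
    subst k k'.
    have xy : (x < y)%R by apply: Ho; rewrite mem_head.
    have x0 : (x < 0)%R by apply: lt_trans xy H01.
    rewrite shD_cons sh_nil_r big_map big_cons big_nil /= lt_eqF //.
    symmetry; rewrite des1; exact: (rhs0 j 0 j').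
  have yw : (y < w)%R by [].
  have xw : (x < w)%R by apply: Ho; rewrite ?mem_head // inE mem_head orbT.
  rewrite shD_cons sh_cons2 big_map big_cat shP_cons shD_cons !big_map.
  rewrite big1; last by move=> a /=; rewrite lt_eqF.
  rewrite Monoid.simpm (eq_bigl xpredT); last by move=> a /=; rewrite eqxx.
  have Hk2 : des (w :: d) = k' by rewrite -Hk' des_cons2 ltNge (ltW yw).
  have -> : (\sum_(i <- sh (x :: p) d | xpredT i) 'X^(des [:: y, w & i]))%R
      = SD xpredT (x :: p) (w :: d).
    rewrite /SD shD_cons big_map; apply: eq_bigr => a _.
    by rewrite des_cons2 ltNge (ltW yw).
  have Ho' : ord (x :: p) (w :: d) by move=> ? ? h1 h2; apply: Ho; rewrite // inE h2 orbT.
  rewrite (@F_closed (x :: p) (w :: d) isT isT Ho').1.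
  have [c1 c2] := cG (x :: p) (w :: d).
  rewrite e1 size_gaps Hj' Hk2 in c1 c2.
  rewrite Hj'; apply: final_sum; rewrite ?c1 ?c2 /=; move: szd hk => /= szd hk.
  all: have hk2 : k' <= size d by rewrite -Hk2; exact: des_le.
  all: lia.
Qed.
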